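(* There exists $\mathcal{G}\subseteq C(\mathbb{R},\mathbb{R})$ such that $\mathcal{K}_\mathcal{G}$ contains every nonempty hereditary family $\mathcal{E}\subseteq\mathrm{CL}(\mathbb{R})$.
   Context: $\mathrm{CL}(\mathbb{R})$ denotes the family of all closed subsets of $\mathbb{R}$ and $C(\mathbb{R},\mathbb{R})$ the set of all continuous functions $\mathbb{R}\to\mathbb{R}$. For $\mathcal{G}\subseteq C(\mathbb{R},\mathbb{R})$ let $R_\mathcal{G}=\{(f,E)\in C(\mathbb{R},\mathbb{R})\times\mathrm{CL}(\mathbb{R}):(\exists g\in\mathcal{G})\, f\restriction E=g\restriction E\}$. For $\mathcal{F}\subseteq C(\mathbb{R},\mathbb{R})$ put $E_\mathcal{G}(\mathcal{F})=\{E\in\mathrm{CL}(\mathbb{R}):(\forall f\in\mathcal{F})\,(f,E)\in R_\mathcal{G}\}$, and let $\mathcal{K}_\mathcal{G}=\{E_\mathcal{G}(\mathcal{F}):\mathcal{F}\subseteq C(\mathbb{R},\mathbb{R})\}$. A family $\mathcal{E}\subseteq\mathrm{CL}(\mathbb{R})$ is hereditary if for all $D,E\in\mathrm{CL}(\mathbb{R})$, $D\subseteq E\in\mathcal{E}$ implies $D\in\mathcal{E}$. *)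

(* Defs.v *)
From Stdlib Require Export Reals.
Open Scope R_scope.

Definition CRR (f : R -> R) : Prop := continuity f.

Definition CL (E : R -> Prop) : Prop := closed_set E.

Definition RG (G : (R -> R) -> Prop) (f : R -> R) (E : R -> Prop) : Prop :=
  CRR f /\ CL E /\ exists g, G g /\ forall x, E x -> f x = g x.

Definition EG (G F : (R -> R) -> Prop) (E : R -> Prop) : Prop :=
  CL E /\ forall f, F f -> RG G f E.

Definition in_KG (G : (R -> R) -> Prop) (fam : (R -> Prop) -> Prop) : Prop :=
  exists F : (R -> R) -> Prop,
    (forall f, F f -> CRR f) /\ (forall E, fam E <-> EG G F E).

Definition hereditary (fam : (R -> Prop) -> Prop) : Prop :=
  forall D E, CL D -> CL E -> (forall x, D x -> E x) -> fam E -> fam D.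

(* Main.v *)
Require Import Defs.
From Stdlib Require Import Reals Lra Classical ClassicalEpsilon FunctionalExtensionality Cantor ZArith Lia.
From Coquelicot Require Import Coquelicot.
Open Scope R_scope.

Definition bv (b:bool) : R := if b then 1 else 0.
Definition ser (b : nat -> bool) (k:nat) : R := bv (b k) * (/3)^k.
Definition S3 (b : nat -> bool) : R := Series (ser b).

Lemma bv_bounds c : 0 <= bv c <= 1.
Proof. destruct c; simpl; lra. Qed.

Lemma third_pow_pos k : 0 < (/3)^k.
Proof. apply pow_lt; lra. Qed.

Lemma ser_bounds b k : 0 <= ser b k <= (/3)^k.
Proof.
  unfold ser. pose proof (bv_bounds (b k)). pose proof (third_pow_pos k).
  split; [apply Rmult_le_pos; lra|]. 
  rewrite <- (Rmult_1_l ((/3)^k)) at 2. apply Rmult_le_compat_r; lra.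
Qed.

Lemma ser_ex b : ex_series (ser b).
Proof.
  apply (@ex_series_le R_AbsRing R_CompleteNormedModule (ser b) (fun k => (/3)^k)).
  - intro n. change (norm (ser b n)) with (Rabs (ser b n)).
    pose proof (ser_bounds b n). rewrite Rabs_right; lra.
  - apply ex_series_geom. rewrite Rabs_right; lra.
Qed.

Lemma S3_decomp b : S3 b = bv (b 0%nat) + / 3 * S3 (fun k => b (S k)).
Proof.
  unfold S3. rewrite Series_incr_1 by apply ser_ex.
  unfold ser at 1. simpl pow. rewrite Rmult_1_r. f_equal.
  rewrite <- Series_scal_l. apply Series_ext. intro n. unfold ser. simpl. ring.
Qed.

Lemma S3_bounds b : 0 <= S3 b <= 3/2.
Proof.
  split.
  - unfold S3. assert (Z : Series (fun _ : nat => 0) = 0).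
    { transitivity (Series (fun n => 0 * ser b n)). apply Series_ext; intro; ring.
      rewrite Series_scal_l; ring. }
    rewrite <- Z.
    apply Series_le; [|apply ser_ex]. intro n. pose proof (ser_bounds b n). lra.
  - unfold S3. replace (3/2) with (Series (fun k => (/3)^k)).
    + apply Series_le; [apply ser_bounds|]. apply ex_series_geom. rewrite Rabs_right; lra.
    + apply is_series_unique. replace (3/2) with (/ (1 - /3)) by field.
      apply is_series_geom. rewrite Rabs_right; lra.
Qed.

Lemma S3_head b b' : S3 b = S3 b' -> b 0%nat = b' 0%nat /\ S3 (fun k => b (S k)) = S3 (fun k => b' (S k)).
Proof.
  intro H. rewrite (S3_decomp b), (S3_decomp b') in H.
  pose proof (S3_bounds (fun k => b (S k))). pose proof (S3_bounds (fun k => b' (S k))).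
  destruct (b 0%nat), (b' 0%nat); simpl in H; split; auto; try lra.
Qed.

Lemma S3_inj n : forall b b', S3 b = S3 b' -> b n = b' n.
Proof.
  induction n; intros b b' H.
  - apply (S3_head b b' H).
  - apply (IHn (fun k => b (S k)) (fun k => b' (S k))). apply (S3_head b b' H).
Qed.

Ltac rabs := repeat (match goal with
 | H : context [Rabs ?a] |- _ => let h := fresh in destruct (Rcase_abs a) as [h|h];
      [rewrite (Rabs_left a h) in *| rewrite (Rabs_right a h) in *]
 | |- context [Rabs ?a] => let h := fresh in destruct (Rcase_abs a) as [h|h];
      [rewrite (Rabs_left a h) in *| rewrite (Rabs_right a h) in *]
 end).

Ltac minmax := unfold Rmin, Rmax in *; repeat (match goal with
 | H : context [Rle_dec ?a ?b] |- _ => destruct (Rle_dec a b)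
 | |- context [Rle_dec ?a ?b] => destruct (Rle_dec a b)
 end).

Definition ctr (n : nat) : R :=
  INR (fst (Cantor.of_nat n)) / INR (S (snd (Cantor.of_nat n))) - INR (snd (Cantor.of_nat n)).
Definition rad (n : nat) : R := / INR (S (snd (Cantor.of_nat n))).

Lemma inI_exists x eps : 0 < eps -> exists n, Rabs (x - ctr n) < rad n /\ 2 * rad n <= eps.
Proof.
  intro He.
  destruct (archimed (Rabs x + 2 / eps)) as [HK _].
  set (K := up (Rabs x + 2 / eps)) in *.
  assert (Hx : 0 <= Rabs x) by apply Rabs_pos.
  assert (He2 : 0 < 2 / eps) by (unfold Rdiv; apply Rmult_lt_0_compat; [lra | apply Rinv_0_lt_compat; lra]).
  assert (HK0 : (0 <= K)%Z) by (apply le_IZR; lra).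
  set (m := Z.to_nat K).
  assert (Hm : INR m = IZR K) by (unfold m; rewrite INR_IZR_INZ, Z2Nat.id; auto).
  set (M := INR (S m)).
  assert (HM : M = INR m + 1) by (unfold M; rewrite S_INR; auto).
  assert (HMp : 0 < M) by lra.
  set (t := (x + INR m) * M).
  assert (Ht : 0 < t).
  { unfold t. apply Rmult_lt_0_compat; [|lra]. assert (- x <= Rabs x) by (rewrite <- Rabs_Ropp; apply RRle_abs). lra. }
  destruct (base_Int_part t) as [Hz1 Hz2].
  set (z := Int_part t) in *.
  assert (Hz0 : (0 <= z)%Z).
  { assert (Hlt : (-1 < z)%Z) by (apply lt_IZR; simpl; lra). lia. }
  set (a := Z.to_nat z).
  assert (Ha : INR a = IZR z) by (unfold a; rewrite INR_IZR_INZ, Z2Nat.id; auto).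
  exists (Cantor.to_nat (a, m)).
  unfold ctr, rad. rewrite Cantor.cancel_of_to. simpl fst; simpl snd. fold M.
  assert (Hinv : 0 < / M) by (apply Rinv_0_lt_compat; lra).
  split.
  - assert (E : x - (INR a / M - INR m) = (t - INR a) * / M).
    { unfold t, Rdiv. field. lra. }
    rewrite E. rewrite Rabs_right.
    + rewrite <- (Rmult_1_l (/ M)) at 2. apply Rmult_lt_compat_r; lra.
    + apply Rle_ge, Rmult_le_pos; lra.
  - assert (2 / eps < M) by lra.
    assert (/ M < eps / 2).
    { apply (Rmult_lt_reg_l M); [lra|]. rewrite Rinv_r by lra.
      apply (Rmult_lt_reg_l (/ eps * 2)). apply Rmult_lt_0_compat; [apply Rinv_0_lt_compat; lra| lra].
      replace (/ eps * 2 * (M * (eps / 2))) with M by (field; lra). lra. }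
    lra.
Qed.

Definition bits (E : R -> Prop) (n : nat) : bool :=
  if excluded_middle_informative (exists x, E x /\ Rabs (x - ctr n) < rad n) then true else false.

Definition lam (E : R -> Prop) : R := 4 + S3 (bits E).

Lemma lam_ge E : 4 <= lam E.
Proof. unfold lam. pose proof (S3_bounds (bits E)). lra. Qed.

Lemma closed_ball D x : CL D -> ~ D x -> exists r, 0 < r /\ forall y, Rabs (y - x) < r -> ~ D y.
Proof.
  unfold CL, closed_set, open_set, neighbourhood, included, disc, complementary.
  intros H nx. destruct (H x nx) as [d Hd]. exists d. split; [apply cond_pos|].
  intros y Hy. apply Hd. exact Hy.
Qed.

Lemma lam_inj E E' x : lam E = lam E' -> CL E' -> E x -> E' x.
Proof.
  intros Hl Hc Ex. apply NNPP; intro nx.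
  destruct (closed_ball _ _ Hc nx) as [r [rp Hr]].
  destruct (inI_exists x r rp) as [n [H1 H2]].
  assert (B1 : bits E n = true).
  { unfold bits. destruct (excluded_middle_informative _) as [_|n0]; [reflexivity|].
    exfalso; apply n0; exists x; split; auto. }
  assert (B2 : bits E' n = false).
  { unfold bits. destruct (excluded_middle_informative _) as [e|_]; [|reflexivity].
    destruct e as [y [Ey Iy]]. exfalso. apply (Hr y); [|exact Ey].
    clear -Iy H1 H2. rabs; lra. }
  assert (S3 (bits E) = S3 (bits E')) by (unfold lam in Hl; lra).
  pose proof (S3_inj n _ _ H). congruence.
Qed.

Lemma cont_const c : continuity (fun _ => c).
Proof. apply continuity_const. intros x y; reflexivity. Qed.

Lemma cont_plus f g : continuity f -> continuity g -> continuity (fun x => f x + g x).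
Proof. intros; exact (continuity_plus f g H H0). Qed.

Lemma cont_minus f g : continuity f -> continuity g -> continuity (fun x => f x - g x).
Proof. intros; exact (continuity_minus f g H H0). Qed.

Lemma cont_scal c f : continuity f -> continuity (fun x => c * f x).
Proof. intros; exact (continuity_scal f c H). Qed.

Lemma cont_abs f : continuity f -> continuity (fun x => Rabs (f x)).
Proof. intros; exact (continuity_comp f Rabs H Rcontinuity_abs). Qed.

Lemma cont_min f g : continuity f -> continuity g -> continuity (fun x => Rmin (f x) (g x)).
Proof.
  intros Hf Hg.
  replace (fun x => Rmin (f x) (g x)) with (fun x => / 2 * ((f x + g x) - Rabs (f x - g x))).
  - apply cont_scal, cont_minus, cont_abs, cont_minus; auto. apply cont_plus; auto.
  - apply functional_extensionality; intro x. minmax; rabs; lra.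
Qed.

Lemma cont_max f g : continuity f -> continuity g -> continuity (fun x => Rmax (f x) (g x)).
Proof.
  intros Hf Hg.
  replace (fun x => Rmax (f x) (g x)) with (fun x => / 2 * ((f x + g x) + Rabs (f x - g x))).
  - apply cont_scal, cont_plus, cont_abs, cont_minus; auto. apply cont_plus; auto.
  - apply functional_extensionality; intro x. minmax; rabs; lra.
Qed.

Lemma cont_absd p : continuity (fun x => Rabs (x - p)).
Proof. apply cont_abs, cont_minus; [exact (derivable_continuous id derivable_id) | apply cont_const]. Qed.

Definition three (E : R -> Prop) := exists a b c, E a /\ E b /\ E c /\ a <> b /\ a <> c /\ b <> c.

Definition Gs (g : R -> R) : Prop :=
  continuity g /\ (forall x, g x <> 0) /\ (forall p q, g p = 2 -> g q = 2 -> p = q) /\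
  (forall E, CL E -> three E -> ~ (forall x, E x -> g x = lam E)).

Definition fsing (p : R) : R -> R := fun x => Rmin (Rabs (x - p)) 1.
Definition fpair (p q : R) : R -> R := fun x => 2 + Rmin (Rmin (Rabs (x - p)) (Rabs (x - q))) 1.

Definition code (E : R -> Prop) (f : R -> R) : Prop :=
  (exists p, (forall x, E x <-> x = p) /\ f = fsing p) \/
  (exists p q, p <> q /\ (forall x, E x <-> x = p \/ x = q) /\ f = fpair p q) \/
  (three E /\ f = fun _ => lam E).

Lemma code_exists E : (exists x, E x) -> exists f, code E f.
Proof.
  intros [a Ea].
  destruct (classic (three E)) as [T|NT].
  { exists (fun _ => lam E). right; right; auto. }
  destruct (classic (exists b, E b /\ b <> a)) as [[b [Eb Hba]]|NB].
  - exists (fpair a b). right; left. exists a, b. split; [auto|]. split; [|reflexivity].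
    intro x; split.
    + intro Ex. destruct (classic (x = a)) as [|xa]; [auto|]. destruct (classic (x = b)) as [|xb]; [auto|].
      exfalso; apply NT. exists a, b, x. repeat split; auto.
    + intros [->| ->]; auto.
  - exists (fsing a). left. exists a. split; [|reflexivity].
    intro x; split.
    + intro Ex. apply NNPP; intro xa. apply NB. exists x; auto.
    + intros ->; auto.
Qed.

Lemma code_cont E f : code E f -> continuity f.
Proof.
  intros [[p [_ ->]]|[[p [q [_ [_ ->]]]]|[_ ->]]].
  - unfold fsing. apply cont_min; [apply cont_absd | apply cont_const].
  - unfold fpair. apply cont_plus; [apply cont_const|].
    apply cont_min; [|apply cont_const]. apply cont_min; apply cont_absd.
  - apply cont_const.
Qed.

Lemma code_noext E f g : CL E -> code E f -> Gs g -> ~ (forall x, E x -> f x = g x).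
Proof.
  intros HE cd [_ [G1 [G2 G3]]] H.
  destruct cd as [[p [Hp ->]]|[[p [q [pq [Hpq ->]]]]|[T ->]]].
  - apply (G1 p). rewrite <- (H p) by (apply Hp; auto).
    unfold fsing. replace (p - p) with 0 by ring. rewrite Rabs_R0. minmax; lra.
  - apply pq. apply G2.
    + rewrite <- (H p) by (apply Hpq; auto). unfold fpair.
      replace (p - p) with 0 by ring. rewrite Rabs_R0. pose proof (Rabs_pos (p - q)). minmax; lra.
    + rewrite <- (H q) by (apply Hpq; auto). unfold fpair.
      replace (q - q) with 0 by ring. rewrite Rabs_R0. pose proof (Rabs_pos (q - p)). minmax; lra.
  - apply (G3 E HE T). intros x Ex. rewrite <- (H x Ex). reflexivity.
Qed.

Lemma far D p r x : (forall y, Rabs (y - p) < r -> ~ D y) -> D x -> r <= Rabs (x - p).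
Proof. intros H Dx. destruct (Rlt_or_le (Rabs (x - p)) r) as [h|h]; [exfalso; exact (H x h Dx)| exact h]. Qed.

Lemma three_pt E : three E -> exists a, E a.
Proof. intros [a [_ [_ [Ea _]]]]. eauto. Qed.

Lemma sing_ext D p r : 0 < r -> (forall y, Rabs (y - p) < r -> ~ D y) ->
  exists g, Gs g /\ forall x, D x -> fsing p x = g x.
Proof.
  intros rp Hr.
  exists (fun x => Rmin (Rmax (Rabs (x - p)) (r - Rabs (x - p))) 1).
  split; [split; [|split; [|split]]|].
  - apply cont_min; [|apply cont_const]. apply cont_max; [apply cont_absd|].
    apply cont_minus; [apply cont_const|apply cont_absd].
  - intro x. minmax; rabs; lra.
  - intros a b Ha. exfalso. revert Ha. minmax; rabs; lra.
  - intros E _ T H. destruct (three_pt E T) as [a Ea]. pose proof (H a Ea). pose proof (lam_ge E).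
    revert H0. minmax; rabs; lra.
  - intros x Dx. pose proof (far D p r x Hr Dx). unfold fsing. minmax; rabs; lra.
Qed.

Lemma pair_ext D p q r : 0 < r -> (forall y, Rabs (y - p) < r -> ~ D y) ->
  exists g, Gs g /\ forall x, D x -> fpair p q x = g x.
Proof.
  intros rp Hr.
  exists (fun x => 2 + Rmin (Rmin (Rmax (Rabs (x - p)) (r - Rabs (x - p))) (Rabs (x - q))) 1).
  split; [split; [|split; [|split]]|].
  - apply cont_plus; [apply cont_const|]. apply cont_min; [|apply cont_const].
    apply cont_min; [|apply cont_absd]. apply cont_max; [apply cont_absd|].
    apply cont_minus; [apply cont_const|apply cont_absd].
  - intro x. minmax; rabs; lra.
  - intros a b Ha Hb. assert (a = q) by (revert Ha; minmax; rabs; lra).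
    assert (b = q) by (revert Hb; minmax; rabs; lra). congruence.
  - intros E _ T H. destruct (three_pt E T) as [a Ea]. pose proof (H a Ea). pose proof (lam_ge E).
    revert H0. minmax; rabs; lra.
  - intros x Dx. pose proof (far D p r x Hr Dx). unfold fpair. minmax; rabs; lra.
Qed.

Lemma three_ext D E p r : CL E -> three E -> E p -> 0 < r -> (forall y, Rabs (y - p) < r -> ~ D y) ->
  exists g, Gs g /\ forall x, D x -> lam E = g x.
Proof.
  intros HE TE Ep rp Hr.
  exists (fun x => lam E + Rmax 0 (r - Rabs (x - p))).
  pose proof (lam_ge E).
  split; [split; [|split; [|split]]|].
  - apply cont_plus; [apply cont_const|]. apply cont_max; [apply cont_const|].
    apply cont_minus; [apply cont_const|apply cont_absd].
  - intro x. minmax; rabs; lra.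
  - intros a b Ha. exfalso. revert Ha. minmax; rabs; lra.
  - intros E' HE' T' H'.
    destruct (classic (exists y, E' y /\ r <= Rabs (y - p))) as [[y [Ey Hy]]|Hn].
    + pose proof (H' y Ey) as Hy'.
      assert (Heq : lam E = lam E') by (revert Hy'; minmax; rabs; lra).
      pose proof (lam_inj E E' p Heq HE' Ep) as E'p.
      pose proof (H' p E'p) as Hp. revert Hp. replace (p - p) with 0 by ring. rewrite Rabs_R0.
      minmax; lra.
    + destruct T' as [a [b [c [Ea [Eb [Ec [ab [ac bc]]]]]]]].
      assert (Ha : Rabs (a - p) < r) by (apply Rnot_le_lt; intro; apply Hn; eauto).
      assert (Hb : Rabs (b - p) < r) by (apply Rnot_le_lt; intro; apply Hn; eauto).
      assert (Hc : Rabs (c - p) < r) by (apply Rnot_le_lt; intro; apply Hn; eauto).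
      pose proof (H' a Ea) as Ga. pose proof (H' b Eb) as Gb. pose proof (H' c Ec) as Gc.
      clear -Ha Hb Hc Ga Gb Gc ab ac bc.
      revert Ga Gb Gc. minmax; rabs; intros; 
      first [ apply ab; lra | apply ac; lra | apply bc; lra | lra ].
  - intros x Dx. pose proof (far D p r x Hr Dx). minmax; rabs; lra.
Qed.

Lemma code_ext E f D p : CL E -> CL D -> code E f -> E p -> ~ D p ->
  exists g, Gs g /\ forall x, D x -> f x = g x.
Proof.
  intros HE HD cd Ep nDp.
  destruct (closed_ball D p HD nDp) as [r [rp Hr]].
  destruct cd as [[p0 [Hp0 ->]]|[[p0 [q0 [pq [Hpq ->]]]]|[T ->]]].
  - apply Hp0 in Ep. subst p0. apply sing_ext with r; auto.
  - apply Hpq in Ep. destruct Ep as [-> | ->].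
    + apply pair_ext with r; auto.
    + destruct (pair_ext D q0 p0 r rp Hr) as [g [Gg Hg]]. exists g. split; auto.
      intros x Dx. rewrite <- (Hg x Dx). unfold fpair. rewrite (Rmin_comm (Rabs (x - p0))). reflexivity.
  - apply three_ext with p r; auto.
Qed.

Theorem theorem2p6 :
  exists G : (R -> R) -> Prop,
    (forall g, G g -> CRR g) /\
    forall fam : (R -> Prop) -> Prop,
      (forall E, fam E -> CL E) ->
      (exists E, fam E) ->
      hereditary fam ->
      in_KG G fam.
Proof.
  exists Gs. split.
  { intros g [Hg _]. exact Hg. }
  intros fam Hcl [E0 H0] Hher.
  exists (fun f => exists E, CL E /\ ~ fam E /\ code E f). split.
  - intros f [E [_ [_ cd]]]. unfold CRR. exact (code_cont E f cd).
  - intro E. split.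
    + intro fE. split; [apply Hcl; auto|].
      intros f [E1 [cE1 [nE1 cd]]]. unfold RG.
      split; [unfold CRR; exact (code_cont E1 f cd)|].
      split; [apply Hcl; auto|].
      destruct (classic (forall x, E1 x -> E x)) as [sub|nsub].
      * exfalso; apply nE1. exact (Hher E1 E cE1 (Hcl E fE) sub fE).
      * apply not_all_ex_not in nsub. destruct nsub as [p Hp].
        apply imply_to_and in Hp. destruct Hp as [E1p nEp].
        exact (code_ext E1 f E p cE1 (Hcl E fE) cd E1p nEp).
    + intros [cE H]. apply NNPP; intro nfE.
      destruct (classic (exists x, E x)) as [ne|emp].
      * destruct (code_exists E ne) as [f cd].
        destruct (H f (ex_intro _ E (conj cE (conj nfE cd)))) as [_ [_ [g [Gg Hg]]]].
        exact (code_noext E f g cE cd Gg Hg).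
      * apply nfE. apply (Hher E E0 cE (Hcl E0 H0)); [|exact H0].
        intros x Ex; exfalso; apply emp; exists x; exact Ex.
Qed.
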